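(* Let $G$ be a compact metrizable monothetic group with Haar measure $\mu$. If $A\subset G$ has $\mu(A)>0$, then $\mu(nA)>0$ for every $n\in\mathbb{Z}\setminus\{0\}$, where $nA=\{na:a\in A\}$.
   Context: A topological group is monothetic if it has a dense cyclic subgroup (hence it is abelian). *)

(* Defs.v *)
From HB Require Import structures.
From mathcomp Require Import all_boot all_order all_algebra.
From mathcomp Require Import all_classical all_reals all_analysis.
Set Implicit Arguments. Unset Strict Implicit. Unset Printing Implicit Defensive.
Import Order.TTheory GRing.Theory Num.Theory.
Local Open Scope classical_set_scope.
Local Open Scope ring_scope.

Definition borel_set (T : topologicalType) (A : set T) : Prop :=
  <<s [set: T], [set U | open U] >> A.

Definition metrizable (R : realType) (T : topologicalType) : Prop :=
  exists d : T -> T -> R,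
    [/\ (forall x y, 0 <= d x y),
        (forall x y, d x y = 0 <-> x = y),
        (forall x y, d x y = d y x),
        (forall x y z, d x z <= d x y + d y z) &
        (forall x (U : set T), nbhs x U <->
           exists e : R, 0 < e /\ [set y | d x y < e] `<=` U)].

Definition monothetic (G : topologicalZmodType) : Prop :=
  exists g : G, closure (range (fun k : int => g *~ k)) = [set: G].

Definition haar_measure (R : realType) (G : topologicalZmodType)
    (mu : set G -> \bar R) : Prop :=
  [/\ mu set0 = 0%E /\ (forall A, borel_set A -> (0 <= mu A)%E),
      (forall F : nat -> set G, (forall n, borel_set (F n)) ->
          trivIset [set: nat] F ->
          (fun n => \sum_(i < n) mu (F i))%E @ \oo --> mu (\bigcup_n F n)),
      mu [set: G] = 1%E,
      (forall (x : G) A, borel_set A -> mu [set x + a | a in A] = mu A) &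
      (forall A, borel_set A ->
          mu A = ereal_sup [set mu K | K in [set K | compact K /\ K `<=` A]])].

(* Main.v *)
Require Import Defs.
From HB Require Import structures.
From mathcomp Require Import all_boot all_order all_algebra.
From mathcomp Require Import all_classical all_reals all_analysis.
From mathcomp Require Import lra.
Import Order.TTheory GRing.Theory Num.Theory.
Local Open Scope classical_set_scope.
Local Open Scope ring_scope.

Section Topo.
Context {G : topologicalZmodType}.

Lemma mulrn_cont (k : nat) : continuous (fun x : G => x *+ k).
Proof.
elim: k => [|k IH].
  have -> : (fun x : G => x *+ 0) = (fun=> 0) by apply/funext => y; rewrite mulr0n.
  exact: cst_continuous.
have -> : (fun x : G => x *+ k.+1) = (fun z : G * G => z.1 + z.2) \o (fun x => (x, x *+ k)).
  by apply/funext => y; rewrite /= mulrS.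
move=> x; apply: continuous_comp; last exact: add_continuous.
by apply: cvg_pair; [exact: cvg_id | exact: IH].
Qed.

Lemma mulrz_cont (n : int) : continuous (fun x : G => x *~ n).
Proof.
case: n => k; first exact: mulrn_cont.
have -> : (fun x : G => x *~ Negz k) = -%R \o (fun x => x *+ k.+1).
  by apply/funext => y; rewrite /= NegzE mulrNz.
move=> x; apply: continuous_comp; [exact: mulrn_cont | exact: opp_continuous].
Qed.

Lemma transl_cont (a : G) : continuous (fun x : G => a + x).
Proof.
have -> : (fun x : G => a + x) = (fun z : G * G => z.1 + z.2) \o (fun x => (a, x)).
  by apply/funext.
move=> x; apply: continuous_comp; last exact: add_continuous.
by apply: cvg_pair; [exact: cvg_cst | exact: cvg_id].
Qed.

Lemma f_cont (n : int) : continuous (fun p : G * G => p.1 + p.2 *~ n).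
Proof.
have -> : (fun p : G * G => p.1 + p.2 *~ n) =
   (fun z : G * G => z.1 + z.2) \o (fun p : G * G => (p.1, p.2 *~ n)) by [].
move=> x; apply: continuous_comp; last exact: add_continuous.
apply: cvg_pair; first exact: cvg_fst.
apply: (@continuous_comp _ _ _ snd (fun y : G => y *~ n)); first exact: cvg_snd.
exact: mulrz_cont.
Qed.

Lemma img_compact (h : G -> G) (A : set G) :
  continuous h -> compact A -> compact (h @` A).
Proof. by move=> hc cA; apply: continuous_compact => //; exact: continuous_subspaceT. Qed.

End Topo.

Lemma in_bigsetU_seq (T : Type) (I : eqType) (s : seq I) (F : I -> set T) i x :
  i \in s -> F i x -> (\big[setU/set0]_(j <- s) F j) x.
Proof.
elim: s => // j s IH; rewrite inE big_cons => /orP[/eqP <- h|/IH h /h]; by [left|right].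
Qed.

Definition GP (G : topologicalZmodType) : Type := G.
HB.instance Definition _ (G : topologicalZmodType) := Choice.on (GP G).
HB.instance Definition _ (G : topologicalZmodType) := isPointed.Build (GP G) 0.
Definition GB (G : topologicalZmodType) := @g_sigma_algebraType (GP G) (@open G).

Section Main.
Variables (R : realType) (G : topologicalZmodType) (mu : set G -> \bar R).
Hypothesis hmu : haar_measure mu.
Hypothesis hcpt : compact [set: G].
Variable d : G -> G -> R.
Hypotheses (d_ge0 : forall x y, 0 <= d x y) (d_eq0 : forall x y, d x y = 0 <-> x = y)
  (d_sym : forall x y, d x y = d y x) (d_tri : forall x y z, d x z <= d x y + d y z)
  (d_nbhs : forall x (U : set G), nbhs x U <->
           exists e : R, 0 < e /\ [set y | d x y < e] `<=` U).
Variable g : G.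
Hypothesis hg : closure (range (fun k : int => g *~ k)) = [set: G].
Variable n : int.
Hypothesis n0 : n != 0.

Lemma ball_nbhs x e : 0 < e -> nbhs x [set y | d x y < e].
Proof. by move=> e0; apply/d_nbhs; exists e; split. Qed.

Lemma ball_open x e : open [set y | d x y < e].
Proof.
rewrite openE => y /= hy; apply/d_nbhs; exists (e - d x y); split.
  by rewrite subr_gt0.
move=> z /= hz; have := d_tri x y z; rewrite ltrBrDl in hz.
move=> h; exact: (le_lt_trans h hz).
Qed.

Lemma d_hausdorff : hausdorff_space G.
Proof.
move=> p q hpq; apply/d_eq0; apply/eqP; rewrite eq_le d_ge0 andbT; apply/negP => /negP.
rewrite -ltNge => dpos.
have e0 : 0 < d p q / 2 by rewrite divr_gt0.
have [z [/= h1 h2]] := hpq _ _ (ball_nbhs p _ e0) (ball_nbhs q _ e0).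
have := d_tri p z q; rewrite (d_sym z q).
have : d p z + d q z < d p q / 2 + d p q / 2 by rewrite ltrD.
rewrite -splitr => h3 h4; have := le_lt_trans h4 h3; by rewrite ltxx.
Qed.

Lemma closed_borel (A : set G) : closed A -> borel_set A.
Proof.
move=> cA; rewrite -(setCK A).
apply: (@measurableC _ (GB G)); apply: sub_sigma_algebra; exact: closed_openC.
Qed.

Lemma compact_borel (A : set G) : compact A -> borel_set A.
Proof. by move=> cA; apply: closed_borel; exact: compact_closed d_hausdorff cA. Qed.

Definition muB (A : set (GB G)) : \bar R := if `[< borel_set A >] then mu A else 0%E.

Lemma muBE (A : set G) : borel_set A -> muB A = mu A.
Proof. by move=> h; rewrite /muB asboolT. Qed.

Lemma muB0 : muB set0 = 0%E.
Proof.
rewrite muBE; first by case: hmu => -[].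
exact: (@measurable0 _ (GB G)).
Qed.
Lemma muB_ge0 (A : set (GB G)) : (0 <= muB A)%E.
Proof.
rewrite /muB; case: ifPn => // /asboolP h.
by case: hmu => -[_ ] /(_ A h).
Qed.
Lemma muB_sa : semi_sigma_additive muB.
Proof.
move=> F mF tF mU; case: hmu => _ h _ _ _.
rewrite muBE; last exact: mU.
have -> : (fun n => \sum_(0 <= i < n) muB (F i))%E = (fun n => \sum_(i < n) mu (F i))%E.
  apply/funext => k; rewrite big_mkord; apply: eq_bigr => i _; apply: muBE; exact: mF.
exact: h.
Qed.
HB.instance Definition _ := isMeasure.Build _ _ _ muB muB0 muB_ge0 muB_sa.
Lemma muBT : muB setT = 1%E.
Proof. rewrite muBE; [by case: hmu | exact: (@measurableT _ (GB G))]. Qed.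
HB.instance Definition _ := Measure_isProbability.Build _ _ _ muB muBT.


Definition Hset : set G := [set x *~ n | x in [set: G]].
Definition Tset (i : nat) : set G := [set g *~ i + h | h in Hset].

Lemma H_compact : compact Hset.
Proof. exact: img_compact (mulrz_cont n) hcpt. Qed.

Lemma H_borel : borel_set Hset.
Proof. exact: compact_borel H_compact. Qed.

Lemma T_compact i : compact (Tset i).
Proof. exact: img_compact (transl_cont _) H_compact. Qed.

Lemma cover : [set: G] `<=` \big[setU/set0]_(i <- iota 0 `|n|%N) Tset i.
Proof.
have cl : closed (\big[setU/set0]_(i <- iota 0 `|n|%N) Tset i).
  apply: closed_bigsetU => i _; exact: compact_closed d_hausdorff (T_compact i).
rewrite -hg => x /(@closureS _ _ (\big[setU/set0]_(i <- iota 0 `|n|%N) Tset i)) h.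
apply: cl; apply: h => _ [k _ <-].
have r0 : 0 <= (k %% n)%Z by rewrite modz_ge0.
have rlt : (k %% n)%Z < `|n| by rewrite ltz_mod.
apply: (@in_bigsetU_seq _ _ _ _ `|(k %% n)%Z|%N).
  by rewrite mem_iota /= add0n -ltz_nat gez0_abs.
exists ((g *~ (k %/ n)%Z) *~ n); first by exists (g *~ (k %/ n)%Z).
rewrite {3}(divz_eq k n) mulrzDr mulrzA addrC; congr (_ + _).
by rewrite gez0_abs.
Qed.

Lemma H_pos : (0 < mu Hset)%E.
Proof.
case: hmu => -[_ ge0] _ muT inv _.
have hge := ge0 _ H_borel.
rewrite lt_def hge andbT; apply/eqP => H0.
have Tb i : borel_set (Tset i) by apply: compact_borel; exact: T_compact.
have Ti0 i : muB (Tset i) = 0%E.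
  rewrite muBE ?Tb // /Tset inv; [exact: H0 | exact: H_borel].
have U0 : forall s, borel_set (\big[setU/set0]_(i <- s) Tset i) /\
                   muB (\big[setU/set0]_(i <- s) Tset i) = 0%E.
  elim => [|i s [IHb IH]].
    rewrite big_nil; split.
    - exact: (@measurable0 _ (GB G)).
    - exact: muB0.
  rewrite big_cons; split.
    by apply: (@measurableU _ (GB G)); [exact: Tb | exact: IHb].
  apply/eqP; rewrite eq_le muB_ge0 andbT.
  have h1 : (muB (Tset i) + muB (\big[setU/set0]_(i <- s) Tset i) = 0)%E.
    by rewrite Ti0 IH adde0.
  apply: le_trans (measureU2 muB (Tb i) IHb) _.
  rewrite le_eqVlt; apply/orP; left; apply/eqP; exact: h1.
have := @le_measure _ _ _ muB setT (\big[setU/set0]_(i <- iota 0 `|n|%N) Tset i).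
rewrite !inE => /(_ (@measurableT _ (GB G)) (U0 _).1 cover) h.
have h' : (muB setT <= muB (\big[setU/set0]_(i <- iota 0 `|n|%N) Tset i))%E := h.
by move: h'; rewrite muBT (U0 _).2 lee_fin ler10.
Qed.


Definition ee (j : int) : G := g *~ j.
Definition rr (m : nat) : R := (m.+1%:R)^-1.
Definition Sset (C : set G) : set (G * G) := [set p | C (p.1 + p.2 *~ n)].
Definition Pm (C : set G) (m : nat) (jk : int * int) :=
  exists s : G * G, Sset C s /\ d (ee jk.1) s.1 < rr m /\ d (ee jk.2) s.2 < rr m.
Definition box (m : nat) (jk : int * int) : set (G * G) :=
  [set y | d (ee jk.1) y < 2 * rr m] `*` [set y | d (ee jk.2) y < 2 * rr m].
Definition Wset (C : set G) (m : nat) : set (G * G) :=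
  \bigcup_(jk : int * int) (if `[< Pm C m jk >] then box m jk else set0).

Lemma rr_gt0 m : 0 < rr m.
Proof. by rewrite /rr invr_gt0 ltr0Sn. Qed.

Lemma S_eq C : closed C -> Sset C = \bigcap_m Wset C m.
Proof.
move=> cC; apply/seteqP; split.
- move=> s Ss m _.
  have dens x : exists j, d x (ee j) < rr m.
    have : closure (range ee) x by rewrite /ee hg.
    move=> /(_ _ (ball_nbhs x _ (rr_gt0 m))) [_ [[j _ <-] hj]].
    by exists j.
  have [j1 h1] := dens s.1; have [j2 h2] := dens s.2.
  exists (j1, j2) => //=.
  rewrite asboolT; last by exists s; rewrite /= !(d_sym (ee _)).
  have r2 : rr m <= 2 * rr m by rewrite ler_peMl ?ler1n // ltW // rr_gt0.
  split => /=; rewrite d_sym; exact: lt_le_trans r2.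
- move=> p Wp; apply: cC => B nB.
  have := f_cont n p _ nB.
  case=> -[U1 U2] /= [/d_nbhs [e1 [e1pos s1]] /d_nbhs [e2 [e2pos s2]]] sub.
  have epos : 0 < Num.min e1 e2 / 3 by rewrite divr_gt0 // lt_min e1pos e2pos.
  have [m _ /(_ m (leqnn _)) hm] := near_infty_natSinv_lt (PosNum epos).
  have [[j1 j2] _] := Wp m I.
  case: asboolP => [[s [Ss [h1 h2]]] [b1 b2] | _ []].
  exists (s.1 + s.2 *~ n); split => //.
  have h3 : 3 * rr m < Num.min e1 e2.
    by rewrite -ltr_pdivlMl // mulrC; exact: hm.
  have [h4 h5] : 3 * rr m < e1 /\ 3 * rr m < e2.
    by move: h3; rewrite lt_min => /andP[].
  have E3 : 2 * rr m + rr m = 3 * rr m by lra.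
  apply: (sub (s.1, s.2)); split => /=.
  + apply: s1 => /=; apply: le_lt_trans (d_tri _ (ee j1) _) _.
    apply: lt_trans h4; rewrite -E3; apply: ltrD => //; by rewrite d_sym.
  + apply: s2 => /=; apply: le_lt_trans (d_tri _ (ee j2) _) _.
    apply: lt_trans h5; rewrite -E3; apply: ltrD => //; by rewrite d_sym.
Qed.

Lemma S_meas C : closed C -> (measurable : set (set (GB G * GB G))) (Sset C).
Proof.
move=> cC; rewrite S_eq //; apply: bigcapT_measurable => m.
apply: countable_bigcupT_measurable => // jk.
case: asboolP => _; last exact: measurable0.
by apply: measurableX; apply: sub_sigma_algebra; exact: ball_open.
Qed.


Lemma key (K : set G) : compact K -> (0 < mu K)%E ->
  (0 < mu [set a *~ n | a in K])%E.
Proof.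
move=> cK Kpos.
case: hmu => -[_ ge0] _ _ inv _.
set C := [set a *~ n | a in K].
have cC : compact C by exact: img_compact (mulrz_cont n) cK.
have clC : closed C by exact: compact_closed d_hausdorff cC.
have bC := closed_borel _ clC.
have bK := compact_borel _ cK.
rewrite lt_def ge0 // andbT; apply/eqP => C0.
have mS := S_meas _ clC.
have := indic_fubini_tonelli muB muB mS.
rewrite indic_fubini_tonelli_FE // indic_fubini_tonelli_GE //.
rewrite [RHS]integral0_eq; last first.
  move=> y _ /=.
  have -> : ysection (Sset C) y = [set - (y *~ n) + c | c in C].
    apply/seteqP; split => x /=.
      rewrite /ysection /Sset /= inE => hx; exists (x + y *~ n); first exact: hx.
      by rewrite addrCA addNr addr0.
    case=> c Cc <-; rewrite /ysection /Sset /= inE /=.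
    by rewrite addrAC addNr add0r.
  rewrite muBE; last first.
    by apply: compact_borel; exact: img_compact (transl_cont _) cC.
  by rewrite inv.
move=> E.
have HK : (0 < mu K * mu Hset)%E by apply: mule_gt0 => //; exact: H_pos.
have mH : (measurable : set (set (GB G))) Hset := H_borel.
have mxs := measurable_fun_xsection muB mS.
have lb : (\int[muB]_(x in Hset) cst (mu K) x <=
           \int[muB]_(x in Hset) (muB \o @xsection (GB G) (GB G) (Sset C)) x)%E.
  apply: ge0_le_integral => //.
  - by move=> x _; exact: ge0.
  - exact: (measurable_funS measurableT (subsetT _) mxs).
  move=> _ [z _ <-] /=.
  set K' := [set - z + k | k in K].
  have cK' : compact K' by exact: img_compact (transl_cont _) cK.
  have -> : mu K = muB K'.
    by rewrite muBE; [rewrite /K' inv | exact: compact_borel _ cK'].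
  apply: le_measure; rewrite ?inE.
  - exact: compact_borel.
  - exact: measurable_xsection.
  move=> _ [k Kk <-]; rewrite /xsection /Sset /= inE /= -mulrzDl addrA addrN add0r.
  by exists k.
have lb2 : (\int[muB]_(x in Hset) (muB \o @xsection (GB G) (GB G) (Sset C)) x <=
           \int[muB]_x (muB \o @xsection (GB G) (GB G) (Sset C)) x)%E.
  apply: ge0_subset_integral => //.
move: lb; rewrite integral_cst // => lb.
have HK' : (0 < mu K * muB Hset)%E by rewrite muBE; [exact: HK | exact: H_borel].
have := lt_le_trans HK' (le_trans lb lb2).
by rewrite E ltxx.
Qed.

Lemma final (A : set G) : borel_set A -> (0 < mu A)%E ->
  exists B : set G, [/\ borel_set B, B `<=` [set a *~ n | a in A] &
                         (0 < mu B)%E].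
Proof.
move=> bA muA.
case: (hmu) => _ _ _ _ inner.
have : (0 < ereal_sup [set mu K | K in [set K | compact K /\ K `<=` A]])%E.
  by rewrite -inner.
move=> /ereal_sup_gtP [_ [K [cK KA] <-] Kpos].
exists [set a *~ n | a in K]; split.
- apply: compact_borel; exact: img_compact (mulrz_cont n) cK.
- move=> _ [a Ka <-]; exists a => //; exact: KA.
- exact: key.
Qed.

End Main.

Theorem lemma7p4 (R : realType) (G : topologicalZmodType)
    (mu : set G -> \bar R) :
  compact [set: G] -> metrizable R G -> monothetic G -> haar_measure mu ->
  forall A : set G, borel_set A -> (0 < mu A)%E ->
  forall n : int, n != 0 ->
    exists B : set G, [/\ borel_set B, B `<=` [set a *~ n | a in A] &
                         (0 < mu B)%E].
Proof.
move=> hcpt [d [d_ge0 d_eq0 d_sym d_tri d_nbhs]] [g hg] hmu A bA muA n n0.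
exact: (@final _ _ _ hmu hcpt _ d_ge0 d_eq0 d_sym d_tri d_nbhs _ hg _ n0 _ bA muA).
Qed.
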